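(* Every scoring method $f:\mathcal{R}^n\to\mathbb{R}^n$ satisfying neutrality, symmetry and strong order preservation satisfies independence of irrelevant matches.
   Context: Let $N=\{X_1,\dots,X_n\}$. A ranking problem is a pair $(N,A)$ where $A=[a_{ij}]$ is a real $n\times n$ matrix with $a_{ii}=0$, $a_{ij}\ge0$ and $a_{ij}+a_{ji}$ a nonnegative integer for all $i\ne j$. Its results matrix is $R=A-A^\top$ and matches matrix $M=A+A^\top$; the problem is equivalently written $(N,R,M)$, and the sum of $(N,A)$ and $(N,A')$ is $(N,A+A')$. $\mathcal{R}^n$ is the set of ranking problems on $N$; a scoring method is a function $f:\mathcal{R}^n\to\mathbb{R}^n$. Neutrality: for a permutation $\sigma$ of $\{1,\dots,n\}$ let $\sigma(N,A)=(N,A^\sigma)$ with $a^\sigma_{\sigma(i)\sigma(j)}=a_{ij}$; $f$ is neutral if $f_{\sigma(i)}(\sigma(N,A))=f_i(N,A)$ for all $\sigma$, all problems and all $i$. Symmetry: if $R=O$ (zero matrix) then $f_i(N,R,M)=f_j(N,R,M)$ for all $X_i,X_j$. Strong order preservation: for all $(N,A),(N,A')\in\mathcal{R}^n$ and all $X_i,X_j$, if $f_i(N,A)\ge f_j(N,A)$ and $f_i(N,A')\ge f_j(N,A')$, then $f_i(N,A+A')\ge f_j(N,A+A')$, strictly if $f_i(N,A)>f_j(N,A)$ or $f_i(N,A')>f_j(N,A')$. Independence of irrelevant matches: for all $(N,A),(N,A')\in\mathcal{R}^n$ and all four pairwise different players $X_i,X_j,X_k,X_\ell$ such that $A$ and $A'$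 agree in every entry except possibly the entries $(k,\ell)$ and $(\ell,k)$, $f_i(N,A)\ge f_j(N,A)$ implies $f_i(N,A')\ge f_j(N,A')$. *)

(* Defs.v *)
From Stdlib Require Import Reals.
From mathcomp Require Import all_boot all_fingroup.
Set Implicit Arguments.
Unset Strict Implicit.
Unset Printing Implicit Defensive.
Open Scope R_scope.

Definition mat (n : nat) := 'I_n -> 'I_n -> R.

Definition ranking_problem (n : nat) (A : mat n) : Prop :=
  forall i j : 'I_n,
    (i = j -> A i j = 0) /\
    (i <> j -> 0 <= A i j /\ exists k : nat, A i j + A j i = INR k).

Definition madd (n : nat) (A A' : mat n) : mat n := fun i j => A i j + A' i j.

Definition results (n : nat) (A : mat n) : mat n := fun i j => A i j - A j i.

(* sigma(N,A) = (N, A^sigma) with a^sigma_{sigma i, sigma j} = a_ij. *)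
Definition mperm (n : nat) (s : {perm 'I_n}) (A : mat n) : mat n :=
  fun x y => A ((s^-1)%g x) ((s^-1)%g y).

(* It is represented as a function on all
   n x n real matrices; only its values on ranking problems matter, since all
   axioms below quantify over ranking problems only. *)
Definition scoring (n : nat) := mat n -> 'I_n -> R.

Definition neutrality_sm (n : nat) (f : scoring n) : Prop :=
  forall (s : {perm 'I_n}) (A : mat n), ranking_problem A ->
    forall i : 'I_n, f (mperm s A) (s i) = f A i.

Definition symmetry_sm (n : nat) (f : scoring n) : Prop :=
  forall A : mat n, ranking_problem A ->
    (forall i j, results A i j = 0) ->
    forall i j : 'I_n, f A i = f A j.

Definition strong_order_preservation (n : nat) (f : scoring n) : Prop :=
  forall A A' : mat n, ranking_problem A -> ranking_problem A' ->
    forall i j : 'I_n,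
      f A i >= f A j -> f A' i >= f A' j ->
      f (madd A A') i >= f (madd A A') j /\
      ((f A i > f A j \/ f A' i > f A' j) ->
         f (madd A A') i > f (madd A A') j).

Definition independence_of_irrelevant_matches (n : nat) (f : scoring n) : Prop :=
  forall A A' : mat n, ranking_problem A -> ranking_problem A' ->
    forall i j k l : 'I_n,
      i <> j -> i <> k -> i <> l -> j <> k -> j <> l -> k <> l ->
      (forall p q : 'I_n, ~ (p = k /\ q = l) -> ~ (p = l /\ q = k) ->
         A p q = A' p q) ->
      f A i >= f A j -> f A' i >= f A' j.

(* Main.v *)
Require Import Defs.
From Stdlib Require Import Reals Lra FunctionalExtensionality.
From mathcomp Require Import all_boot all_fingroup.
Set Implicit Arguments.
Open Scope R_scope.

Definition kl (n : nat) (k l p q : 'I_n) : bool :=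
  ((p == k) && (q == l)) || ((p == l) && (q == k)).

Lemma klC n (k l p q : 'I_n) : kl k l p q = kl k l q p.
Proof. rewrite /kl; case: (p == k); case: (q == l); case: (p == l); case: (q == k); by []. Qed.

Definition Dof n (k l : 'I_n) (A : mat n) : mat n :=
  fun p q => if kl k l p q then A p q else 0.
Definition Cof n (k l : 'I_n) (A : mat n) : mat n :=
  fun p q => if kl k l p q then 0 else A p q.

Lemma Dof_rp n (k l : 'I_n) A : ranking_problem A -> ranking_problem (Dof k l A).
Proof.
move=> HA p q; rewrite /Dof klC; case: (HA p q) => H1 H2; split.
- move=> e; case: (kl k l q p) => //; exact: H1.
- move=> ne; rewrite klC; case: (kl k l p q) => //; first exact: H2.
  split; first lra. exists 0%nat; simpl; lra.
Qed.

Lemma Cof_rp n (k l : 'I_n) A : ranking_problem A -> ranking_problem (Cof k l A).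
Proof.
move=> HA p q; rewrite /Cof klC; case: (HA p q) => H1 H2; split.
- move=> e; case: (kl k l q p) => //; exact: H1.
- move=> ne; rewrite klC; case: (kl k l p q) => //; last exact: H2.
  split; first lra. exists 0%nat; simpl; lra.
Qed.

Lemma Dof_perm n (i j k l : 'I_n) A :
  i <> k -> i <> l -> j <> k -> j <> l ->
  mperm (tperm i j) (Dof k l A) = Dof k l A.
Proof.
move=> hik hil hjk hjl.
have fk : tperm i j k = k by apply: tpermD; apply/eqP; congruence.
have fl : tperm i j l = l by apply: tpermD; apply/eqP; congruence.
have E : forall x y, tperm i j x == y = (x == tperm i j y).
  by move=> x y; rewrite -{1}(tpermK i j y) (inj_eq (@perm_inj _ _)).
apply: functional_extensionality => x; apply: functional_extensionality => y.
rewrite /mperm /Dof tpermV /kl !E fk fl.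
case: (boolP (((x == k) && (y == l)) || ((x == l) && (y == k)))) => //.
case/orP=> /andP [/eqP -> /eqP ->]; by rewrite fk fl.
Qed.

Theorem proposition4p1 (n : nat) (f : scoring n) :
  neutrality_sm f -> symmetry_sm f -> strong_order_preservation f ->
  independence_of_irrelevant_matches f.
Proof.
move=> Hneu _ Hsop A A' HA HA' i j k l hij hik hil hjk hjl hkl Heq Hge.
have Dij : forall B, ranking_problem B -> f (Dof k l B) i = f (Dof k l B) j.
  move=> B HB; have := Hneu (tperm i j) (Dof k l B) (Dof_rp k l HB) i.
  by rewrite Dof_perm // tpermL => <-.
have EA : A = madd (Cof k l A) (Dof k l A).
  apply: functional_extensionality => x; apply: functional_extensionality => y.
  rewrite /madd /Cof /Dof; case: (kl k l x y); ring.
have EC : Cof k l A = Cof k l A'.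
  apply: functional_extensionality => x; apply: functional_extensionality => y.
  rewrite /Cof; case E: (kl k l x y) => //; apply: Heq.
  - by case=> ex ey; move: E; rewrite /kl ex ey !eqxx.
  - by case=> ex ey; move: E; rewrite /kl ex ey !eqxx orbT.
have EA' : A' = madd (Cof k l A) (Dof k l A').
  apply: functional_extensionality => x; apply: functional_extensionality => y.
  rewrite EC /madd /Cof /Dof; case: (kl k l x y); ring.
have HC := Cof_rp k l HA.
have D1 := Dij A HA. have D2 := Dij A' HA'.
case: (Rlt_or_le (f (Cof k l A) i) (f (Cof k l A) j)) => hC.
- have [_ H] := Hsop _ _ HC (Dof_rp k l HA) j i ltac:(lra) ltac:(lra).
  rewrite -EA in H; have := H (or_introl hC); lra.
- have [H _] := Hsop _ _ HC (Dof_rp k l HA') i j ltac:(lra) ltac:(lra).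
  by rewrite -EA' in H.
Qed.
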